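(* Let $(q_n)$ be the Fibonacci Quilt sequence. Then (1) $2q_n=q_{n+2}+q_{n-5}$ for all $n\ge7$; (2) $q_n+q_{n-2}=q_{n+1}+q_{n-5}$ for all $n\ge8$; (3) $q_n+q_{n-3}=q_{n+1}+q_{n-8}$ for all $n\ge10$.
   Context: Given an increasing sequence of positive integers $(q_i)_{i\ge1}$, an FQ-legal decomposition of an integer $m\ge0$ is an expression $m=q_{\ell_1}+q_{\ell_2}+\cdots+q_{\ell_t}$ ($t\ge0$, the empty sum representing $0$) with distinct indices $\ell_1>\ell_2>\cdots>\ell_t$ such that $|\ell_i-\ell_j|\notin\{1,3,4\}$ for all $i,j$, and $\{1,3\}\not\subset\{\ell_1,\dots,\ell_t\}$. The Fibonacci Quilt sequence is the increasing sequence of positive integers $(q_i)_{i\ge1}$ in which each $q_i$ is the smallest positive integer having no FQ-legal decomposition using only $q_1,\dots,q_{i-1}$. Its first terms are $1,2,3,4,5,7,9,12,16,21,28,37,49,\dots$. *)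

(* Defs.v *)
From mathcomp Require Import all_boot.
Set Implicit Arguments. Unset Strict Implicit. Unset Printing Implicit Defensive.

Fixpoint subs (s : seq nat) : seq (seq nat) :=
  match s with
  | [::] => [:: [::]]
  | x :: t => let r := subs t in [seq x :: L | L <- r] ++ r
  end.

Definition bad_gap (i j : nat) : bool :=
  let d := if i <= j then j - i else i - j in
  (d == 1) || (d == 3) || (d == 4).

Definition fq_legal (L : seq nat) : bool :=
  [&& uniq L,
      all (fun i => all (fun j => ~~ bad_gap i j) L) L &
      ~~ ((1 \in L) && (3 \in L))].

(* s is the list [q_1; ...; q_k]; q_l = nth 0 s l.-1. *)
Definition term (s : seq nat) (l : nat) : nat := nth 0 s l.-1.

Definition has_fq_decomp (s : seq nat) (m : nat) : bool :=
  has (fun L => fq_legal L && (sumn (map (term s) L) == m))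
      (subs (iota 1 (size s))).

(* The smallest positive integer with no FQ-legal decomposition using the
   terms in s (the search up to (sumn s).+1 always succeeds since a sum of
   distinct terms is at most sumn s). *)
Definition fq_next (s : seq nat) : nat :=
  (find (fun m => ~~ has_fq_decomp s m) (iota 1 (sumn s).+1)).+1.

Definition fq_prefix (n : nat) : seq nat :=
  iter n (fun s => rcons s (fq_next s)) [::].

(* The Fibonacci Quilt sequence, 1-indexed: fq n = q_n for n >= 1 (fq 0 = 0, unused). *)
Definition fq (n : nat) : nat := nth 0 (fq_prefix n) n.-1.

(* Main.v *)
Require Import Defs.
From mathcomp Require Import all_boot.
From mathcomp Require Import zify.

Fixpoint pad (n : nat) : nat :=
  match n with
  | 0 => 0 | 1 => 1 | 2 => 2 | 3 => 3 | 4 => 4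
  | S (S ((S (S (S m as n1) as n2) as n3))) => pad n3 + pad n2
  end.

Lemma pad_rec m : pad (m + 5) = pad (m + 3) + pad (m + 2).
Proof. by rewrite !addnS !addn0. Qed.

Lemma pad_lt n : pad n < pad n.+1.
Proof.
elim/ltn_ind: n => n IH.
case: n IH => [|[|[|[|[|[|m]]]]]] IH //.
have h0 := pad_rec m. have h1 := pad_rec m.+1. have h2 := pad_rec m.+2.
have i1 := IH m.+3 (ltac:(lia)). have i2 := IH m.+4 (ltac:(lia)).
rewrite ?addnS ?addSn ?addn0 ?add0n in h0 h1 h2 i1 i2 *.
lia.
Qed.

Lemma pad_mono m n : m < n -> pad m < pad n.
Proof.
elim: n => // n IH; rewrite ltnS leq_eqVlt => /orP[/eqP->|h]; first exact: pad_lt.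
exact: ltn_trans (IH h) (pad_lt n).
Qed.

Lemma pad_le m n : m <= n -> pad m <= pad n.
Proof. rewrite leq_eqVlt => /orP[/eqP->//|h]; exact: ltnW (pad_mono _ _ h). Qed.

Lemma nbg i j : ~~ bad_gap i j ->
  [/\ i+1 != j, j+1 != i, i+3 != j & j+3 != i] /\ (i+4 != j) /\ (j+4 != i).
Proof.
rewrite /bad_gap; case: leqP => h; rewrite !negb_or => /andP[/andP[a b] c];
(split; [split|split]); lia.
Qed.

Lemma gap_ok i j : i + 5 <= j -> ~~ bad_gap i j /\ ~~ bad_gap j i.
Proof. by move=> h; rewrite /bad_gap; split; case: leqP => h2; lia. Qed.

Ltac pnorm := rewrite ?addnS ?addSn ?addn0 ?add0n.

Lemma pad_ids :
  (forall n : nat, 7 <= n -> 2 * pad n = pad (n + 2) + pad (n - 5)) /\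
  (forall n : nat, 8 <= n -> pad n + pad (n - 2) = pad (n + 1) + pad (n - 5)) /\
  (forall n : nat, 10 <= n -> pad n + pad (n - 3) = pad (n + 1) + pad (n - 8)).
Proof.
split; [|split] => n hn.
- have -> : n = (n - 7) + 7 by lia.
  have -> : n - 7 + 7 - 5 = n - 7 + 2 by lia.
  move: (n - 7) => m.
  have := pad_rec m; have := pad_rec (m+1); have := pad_rec (m+2);
  have := pad_rec (m+3); have := pad_rec (m+4). pnorm; lia.
- have -> : n = (n - 8) + 8 by lia.
  have -> : n - 8 + 8 - 5 = n - 8 + 3 by lia.
  have -> : n - 8 + 8 - 2 = n - 8 + 6 by lia.
  move: (n - 8) => m.
  have := pad_rec m; have := pad_rec (m+1); have := pad_rec (m+2);
  have := pad_rec (m+3); have := pad_rec (m+4). pnorm; lia.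
- have -> : n = (n - 10) + 10 by lia.
  have -> : n - 10 + 10 - 3 = n - 10 + 7 by lia.
  have -> : n - 10 + 10 - 8 = n - 10 + 2 by lia.
  move: (n - 10) => m.
  have := pad_rec m; have := pad_rec (m+1); have := pad_rec (m+2);
  have := pad_rec (m+3); have := pad_rec (m+4); have := pad_rec (m+5);
  have := pad_rec (m+6). pnorm; lia.
Qed.

Lemma sumn_rem (f : nat -> nat) x L : x \in L ->
  sumn (map f L) = f x + sumn (map f (rem x L)).
Proof.
elim: L => //= y L IH; rewrite in_cons => h.
have [e|ne] := eqVneq y x; first by subst y; idtac.
rewrite /= IH; first lia.
by move: h; rewrite eq_sym (negbTE ne).
Qed.

Lemma legalP L : fq_legal L ->
  [/\ uniq L, (forall i j, i \in L -> j \in L -> ~~ bad_gap i j) &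
      ~~ ((1 \in L) && (3 \in L))].
Proof.
case/and3P=> u /allP a c; split=> // i j hi hj.
exact: (allP (a i hi)).
Qed.

Lemma legal_intro L : uniq L -> (forall i j, i \in L -> j \in L -> ~~ bad_gap i j) ->
  ~~ ((1 \in L) && (3 \in L)) -> fq_legal L.
Proof.
move=> u a c; apply/and3P; split=> //; apply/allP=> i hi; apply/allP=> j hj.
exact: a.
Qed.

Lemma legal_rem L x : fq_legal L -> fq_legal (rem x L).
Proof.
case/legalP=> u a c; apply: legal_intro; first exact: rem_uniq.
- move=> i j /(mem_rem) hi /mem_rem hj; exact: a.
- apply: contra c => /andP[/mem_rem -> /mem_rem ->]. by [].
Qed.

Definition inr k (L : seq nat) := all (fun i => 0 < i <= k) L.

Definition rep k m := exists L, [/\ fq_legal L, inr k L & sumn (map pad L) = m].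

Lemma rep_widen k k' m : k <= k' -> rep k m -> rep k' m.
Proof.
move=> h [L [lL /allP iL sL]]; exists L; split=> //; apply/allP=> i /iL.
case/andP=> a b; rewrite a /=; exact: leq_trans b h.
Qed.

Lemma rep0 k : rep k 0.
Proof. by exists [::]. Qed.

Lemma mem_subs L s : (L \in subs s) = subseq L s.
Proof.
elim: s L => [|x s IH] L /=.
  by case: L.
rewrite mem_cat; case: L => [|y L] /=.
  by rewrite IH sub0seq orbT.
case: (eqVneq y x) => [->|ne].
  apply/idP/idP.
  - case/orP=> [/mapP[L' h [->]]|]; first by rewrite -IH.
    rewrite IH => h; exact: (subseq_trans (subseq_cons L x) h).
  - by move=> h; apply/orP; left; apply/mapP; exists L => //; rewrite IH.
rewrite IH; apply/idP/idP.
- case/orP=> // /mapP[L' _ [e _]]; by rewrite e eqxx in ne.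
- by move=> ->; rewrite orbT.
Qed.

Lemma term_pad k i : 0 < i <= k -> term (map pad (iota 1 k)) i = pad i.
Proof.
case/andP=> a b; rewrite /term (nth_map 0); last by rewrite size_iota; lia.
by rewrite nth_iota; [congr pad; lia | lia].
Qed.

Lemma has_rep k m : has_fq_decomp (map pad (iota 1 k)) m -> rep k m.
Proof.
case/hasP=> L; rewrite size_map size_iota mem_subs => sL /andP[lL /eqP sm].
have iL : inr k L.
  apply/allP=> i /(mem_subseq sL); rewrite mem_iota; lia.
exists L; split=> //; rewrite -sm; congr sumn; apply/eq_in_map=> i hi.
by rewrite term_pad //; move/allP: iL => /(_ i hi).
Qed.

Lemma rep_has k m : rep k m -> has_fq_decomp (map pad (iota 1 k)) m.
Proof.
case=> L [lL /allP iL sm].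
case/legalP: lL => u a c.
set L2 := [seq i <- iota 1 k | i \in L].
have mL2 : forall i, (i \in L2) = (i \in L).
  move=> i; rewrite mem_filter mem_iota; case hi: (i \in L) => //=.
  by move: (iL i hi); lia.
have pe : perm_eq L2 L.
  apply: uniq_perm => //; first exact: filter_uniq (iota_uniq 1 k).
apply/hasP; exists L2.
  by rewrite mem_subs size_map size_iota filter_subseq.
apply/andP; split.
  apply: legal_intro; first exact: filter_uniq (iota_uniq 1 k).
  - by move=> i j; rewrite !mL2; exact: a.
  - by rewrite !mL2.
rewrite -sm; apply/eqP.
have -> : sumn [seq term (map pad (iota 1 k)) i | i <- L2] = sumn (map pad L2).
  congr sumn; apply/eq_in_map=> i; rewrite mL2 => hi; exact: term_pad (iL i hi).
by apply: perm_sumn; apply: perm_map.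
Qed.

Lemma inrP k L : reflect (forall i, i \in L -> 0 < i <= k) (inr k L).
Proof. exact: allP. Qed.

Lemma gap_cases i k : i <= k -> i != k -> ~~ bad_gap i k -> (i + 2 == k) || (i + 5 <= k).
Proof. by move=> a b /nbg[[c d e f] [g h]]; lia. Qed.

Lemma idx2 j k : j <= k -> j != k -> ~~ bad_gap j k -> j != k - 2 ->
  ~~ bad_gap j (k - 2) -> j + 7 <= k.
Proof.
move=> a b c d e; move: (gap_cases _ _ a b c) => /orP[f|f]; first lia.
move/nbg: e => [[f1 f2 f3 f4] [f5 f6]]; lia.
Qed.

Lemma idx1 i k : i <= k -> i != k -> ~~ bad_gap i k -> i != k - 2 -> i + 5 <= k.
Proof. move=> a b c d; move: (gap_cases _ _ a b c) => /orP[f|f]; lia. Qed.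

Lemma ineqA k : 3 <= k -> pad k + pad (k - 2) + pad (k - 7 + 3) <= pad (k + 3).
Proof.
move=> hk; case: (ltnP k 7) => h.
  by case: k hk h => [|[|[|[|[|[|[|k]]]]]]].
have -> : k = (k - 7) + 7 by lia.
have -> : k - 7 + 7 - 2 = k - 7 + 5 by lia.
have -> : k - 7 + 7 - 7 + 3 = k - 7 + 3 by lia.
move: (k - 7) => m.
have := pad_rec (m+3); have := pad_rec (m+4); have := pad_rec (m+5);
have := pad_le (m+3) (m+6) (ltac:(lia)). pnorm; lia.
Qed.

Lemma ineqB k : 1 <= k -> pad k + pad (k - 5 + 3) <= pad (k + 3).
Proof.
move=> hk; case: (ltnP k 5) => h.
  by case: k hk h => [|[|[|[|[|k]]]]].
have -> : k = (k - 5) + 5 by lia.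
have -> : k - 5 + 5 - 5 + 3 = k - 5 + 3 by lia.
move: (k - 5) => m.
have := pad_rec (m+3); have := pad_le (m+3) (m+6) (ltac:(lia)). pnorm; lia.
Qed.

Lemma boundM k L : fq_legal L -> inr k L -> sumn (map pad L) < pad (k + 3).
Proof.
elim/ltn_ind: k L => k IH L lL /inrP iL.
case/legalP: (lL) => u a c.
case: (posnP k) => [k0|kpos].
  subst k; case: L iL {IH lL a c u} => [|x L] iL //; by move: (iL x (mem_head _ _)); lia.
have [kL|kL] := boolP (k \in L); last first.
  have h : inr (k - 1) L.
    apply/inrP => i hi; move: (iL i hi).
    have : i != k by apply: contraNneq kL => <-.
    lia.
  have := IH (k - 1) (ltac:(lia)) L lL h.
  have := pad_le (k - 1 + 3) (k + 3) (ltac:(lia)). lia.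
rewrite (sumn_rem pad _ _ kL).
set L1 := rem k L.
have lL1 : fq_legal L1 by exact: legal_rem.
have mL1 : forall i, i \in L1 -> [/\ i \in L, 0 < i, i <= k, i != k & ~~ bad_gap i k].
  move=> i; rewrite /L1 mem_rem_uniq // => /andP[ne hi].
  have := iL i hi; case/andP=> h1 h2; split=> //; exact: a.
have [k2|k2] := boolP (k - 2 \in L1).
  rewrite (sumn_rem pad _ _ k2).
  set L2 := rem (k - 2) L1.
  have lL2 : fq_legal L2 by exact: legal_rem.
  case/mL1: (k2) => _ p1 _ _ _.
  have h : inr (k - 7) L2.
    apply/inrP => j; rewrite /L2 mem_rem_uniq; last by case/legalP: lL1.
    case/andP=> ne hj; case/mL1: (hj) => jL j0 jk jne jb.
    have jb2 : ~~ bad_gap j (k - 2) by apply: a => //; case/mL1: k2.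
    have := idx2 _ _ jk jne jb ne jb2; clear -j0; lia.
  have := IH (k - 7) (ltac:(lia)) L2 lL2 h.
  have := ineqA k (ltac:(lia)). lia.
have h : inr (k - 5) L1.
  apply/inrP => i hi; case/mL1: (hi) => iL' i0 ik ine ib.
  have ne : i != k - 2 by apply: contraNneq k2 => <-.
  have := idx1 _ _ ik ine ib ne; clear -i0; lia.
have := IH (k - 5) (ltac:(lia)) L1 lL1 h.
have := ineqB k (ltac:(lia)). lia.
Qed.

Lemma pad_rec2 k : 6 <= k -> pad k.+1 = pad k + pad (k - 4).
Proof.
move=> hk; have -> : k = (k - 6) + 6 by lia.
have -> : k - 6 + 6 - 4 = k - 6 + 2 by lia.
move: (k - 6) => m.
have := pad_rec m; have := pad_rec (m+1); have := pad_rec (m+2). pnorm; lia.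
Qed.

Lemma baseA : all (fun k => all (fun m => has_fq_decomp (map pad (iota 1 k)) m)
  (iota 0 (pad k.+1))) (iota 0 9).
Proof. by vm_compute. Qed.

Lemma baseB : all (fun k => ~~ has_fq_decomp (map pad (iota 1 k)) (pad k.+1)) (iota 0 9).
Proof. by vm_compute. Qed.

Lemma repA k m : m < pad k.+1 -> rep k m.
Proof.
elim/ltn_ind: k m => k IH m hm.
case: (ltnP k 9) => hk.
  apply: has_rep; move/allP: baseA => /(_ k); rewrite mem_iota => /(_ (ltac:(lia))).
  by move/allP => /(_ m); rewrite mem_iota; apply; lia.
case: (ltnP m (pad k)) => hmk.
  apply: (rep_widen (k - 1) k m); first lia.
  apply: IH; first lia. by have -> : (k - 1).+1 = k by lia.
have hr := pad_rec2 k (ltac:(lia)).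
have : rep (k - 5) (m - pad k).
  apply: IH; first lia. have -> : (k - 5).+1 = k - 4 by lia. lia.
case=> L [lL /inrP iL sL].
case/legalP: lL => u a c.
exists (k :: L); split.
- apply: legal_intro.
  + rewrite /= u andbT; apply/negP => /iL; lia.
  + move=> i j; rewrite !in_cons => /orP[/eqP->|hi] /orP[/eqP->|hj].
    * by rewrite /bad_gap leqnn subnn.
    * by case: (gap_ok j k (ltac:(move: (iL j hj); lia))).
    * by case: (gap_ok i k (ltac:(move: (iL i hi); lia))).
    * exact: a.
  + rewrite !in_cons; have -> : (1 == k) = false by apply/eqP; lia.
    by have -> : (3 == k) = false by apply/eqP; lia.
- apply/inrP => i; rewrite in_cons => /orP[/eqP->|hi]; first lia.
  move: (iL i hi); lia.
- rewrite /= sL; lia.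
Qed.

Lemma padR j : 5 <= j -> pad j = pad (j - 2) + pad (j - 3).
Proof.
move=> hj; have -> : j = (j - 5) + 5 by lia.
have -> : j - 5 + 5 - 2 = j - 5 + 3 by lia.
have -> : j - 5 + 5 - 3 = j - 5 + 2 by lia.
exact: pad_rec.
Qed.

Lemma facts n : 9 <= n ->
  [/\ pad n.+1 = pad n + pad (n - 4), pad n.+1 = pad (n - 1) + pad (n - 2),
      pad (n - 2) = pad (n - 4) + pad (n - 5), pad (n - 3) = pad (n - 5) + pad (n - 6)
    & pad (n - 4) = pad (n - 6) + pad (n - 7)].
Proof.
move=> hn.
have R1 := pad_rec2 n (ltac:(lia)).
have R2 := padR n.+1 (ltac:(lia)).
have R3 := padR (n - 2) (ltac:(lia)).
have R4 := padR (n - 3) (ltac:(lia)).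
have R5 := padR (n - 4) (ltac:(lia)).
have e1 : n.+1 - 2 = n - 1 by lia.
have e2 : n.+1 - 3 = n - 2 by lia.
have e3 : n - 2 - 2 = n - 4 by lia.
have e4 : n - 2 - 3 = n - 5 by lia.
have e5 : n - 3 - 2 = n - 5 by lia.
have e6 : n - 3 - 3 = n - 6 by lia.
have e7 : n - 4 - 2 = n - 6 by lia.
have e8 : n - 4 - 3 = n - 7 by lia.
rewrite e1 e2 in R2; rewrite e3 e4 in R3; rewrite e5 e6 in R4; rewrite e7 e8 in R5.
by split.
Qed.

Lemma repB k : ~ rep k (pad k.+1).
Proof.
elim/ltn_ind: k => n IH.
case: (ltnP n 9) => hn.
  move=> /rep_has; apply/negP.
  by move/allP: baseB => /(_ n); rewrite mem_iota; apply; lia.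
case=> L [lL /inrP iL sL].
case/legalP: (lL) => u a c.
have [nL|nL] := boolP (n \in L).
  move: sL; rewrite (sumn_rem pad _ _ nL) => sL.
  set L1 := rem n L in sL.
  have lL1 : fq_legal L1 by exact: legal_rem.
  have mL1 : forall i, i \in L1 -> [/\ i \in L, 0 < i, i <= n, i != n & ~~ bad_gap i n].
    move=> i; rewrite /L1 mem_rem_uniq // => /andP[ne hi].
    have := iL i hi; case/andP=> h1 h2; split=> //; exact: a.
  have [k2|k2] := boolP (n - 2 \in L1).
    move: sL; rewrite (sumn_rem pad _ _ k2).
    have [R1 _ _ _ _] := facts n hn. have M1 := pad_mono (n - 4) (n - 2) (ltac:(lia)). lia.
  apply: (IH (n - 5) (ltac:(lia))).
  have -> : (n - 5).+1 = n - 4 by lia.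
  exists L1; split=> //; last by have [R1 _ _ _ _] := facts n hn; lia.
  apply/inrP => i hi; case/mL1: (hi) => iL' i0 ik ine ib.
  have ne : i != n - 2 by apply: contraNneq k2 => <-.
  have := idx1 _ _ ik ine ib ne; clear -i0; lia.
have [n1L|n1L] := boolP (n - 1 \in L); last first.
  have h : inr (n - 2) L.
    apply/inrP => i hi; move: (iL i hi).
    have : i != n by apply: contraNneq nL => <-.
    have : i != n - 1 by apply: contraNneq n1L => <-.
    lia.
  have := boundM (n - 2) L lL h. have -> : n - 2 + 3 = n.+1 by lia. lia.
move: sL; rewrite (sumn_rem pad _ _ n1L) => sL.
set L1 := rem (n - 1) L in sL.
have lL1 : fq_legal L1 by exact: legal_rem.
have mL1 : forall i, i \in L1 ->
    [/\ i \in L, 0 < i, i <= n - 1, i != n - 1 & ~~ bad_gap i (n - 1)].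
  move=> i; rewrite /L1 mem_rem_uniq // => /andP[ne hi].
  have := iL i hi; case/andP=> h1 h2.
  have : i != n by apply: contraNneq nL => <-.
  move=> h3; split=> //; [lia | exact: a].
have [k3|k3] := boolP (n - 3 \in L1).
  move: sL; rewrite (sumn_rem pad _ _ k3) => sL.
  set L2 := rem (n - 3) L1 in sL.
  have lL2 : fq_legal L2 by exact: legal_rem.
  apply: (IH (n - 8) (ltac:(lia))).
  have -> : (n - 8).+1 = n - 7 by lia.
  exists L2; split=> //; last by have [_ R2 R3 R4 R5] := facts n hn; clear -sL R2 R3 R4 R5; lia.
  apply/inrP => j; rewrite /L2 mem_rem_uniq; last by case/legalP: lL1.
  case/andP=> ne hj; case/mL1: (hj) => jL j0 jk jne jb.
  have jb2 : ~~ bad_gap j (n - 3) by apply: a => //; case/mL1: k3.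
  have e3 : n - 1 - 2 = n - 3 by clear -hn; lia.
  rewrite -e3 in ne jb2.
  have := idx2 _ _ jk jne jb ne jb2; clear -j0 hn; lia.
have h : inr (n - 6) L1.
  apply/inrP => i hi; case/mL1: (hi) => iL' i0 ik ine ib.
  have e3 : n - 1 - 2 = n - 3 by clear -hn; lia.
  have ne : i != n - 1 - 2 by rewrite e3; apply: contraNneq k3 => <-.
  have := idx1 _ _ ik ine ib ne; clear -i0 hn; lia.
have := boundM (n - 6) L1 lL1 h. have -> : n - 6 + 3 = n - 3 by lia.
have [_ R2 R3 _ _] := facts n hn. have M2 := pad_mono (n - 3) (n - 2) (ltac:(lia)). lia.
Qed.

Lemma pad2 n : 1 <= n -> pad n.+1 <= 2 * pad n.
Proof.
move=> hn; case: (ltnP n 6) => h.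
  by case: n hn h => [|[|[|[|[|[|n]]]]]].
rewrite pad_rec2 //; have := pad_le (n - 4) n (ltac:(lia)); lia.
Qed.

Lemma sum_bound n : pad n.+1 <= sumn (map pad (iota 1 n)) + 1.
Proof.
elim: n => [|n IH] //.
have -> : iota 1 n.+1 = iota 1 n ++ [:: n.+1] by rewrite -[in LHS](addn1 n) iotaD /= add1n.
rewrite map_cat sumn_cat.
have -> : sumn [seq pad i | i <- [:: n.+1]] = pad n.+1 by exact: addn0.
have := pad2 n.+1 isT. lia.
Qed.

Lemma find_iota (p : pred nat) a K j : j < K -> (forall i, i < j -> ~~ p (a + i)) ->
  p (a + j) -> find p (iota a K) = j.
Proof.
elim: j a K => [|j IH] a [|K] //= hK hb hp.
  by rewrite addn0 in hp; rewrite hp.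
have := hb 0 isT; rewrite addn0 => /negbTE ->; congr S.
apply: IH => //.
  by move=> i hi; rewrite addSn -addnS; apply: hb.
by rewrite addSn -addnS.
Qed.

Lemma next_pad n : fq_next (map pad (iota 1 n)) = pad n.+1.
Proof.
have p1 : 0 < pad n.+1 by have := pad_mono 0 n.+1 isT.
rewrite /fq_next (find_iota _ 1 _ (pad n.+1).-1).
- lia.
- have := sum_bound n; lia.
- move=> i hi; rewrite negbK; apply: rep_has.
  apply: repA; lia.
- have -> : 1 + (pad n.+1).-1 = pad n.+1 by lia.
  by apply/negP => /has_rep; apply: repB.
Qed.

Lemma prefix_pad n : fq_prefix n = map pad (iota 1 n).
Proof.
elim: n => [|n IH] //.
rewrite /fq_prefix iterS -/(fq_prefix n) IH next_pad.
have -> : iota 1 n.+1 = iota 1 n ++ [:: n.+1] by rewrite -[in LHS](addn1 n) iotaD /= add1n.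
by rewrite map_cat cats1.
Qed.

Lemma fq_pad n : fq n = pad n.
Proof.
case: n => [|n] //.
rewrite /fq prefix_pad; exact: (term_pad n.+1 n.+1 (ltac:(lia))).
Qed.

Theorem mainTheorem17 :
  (forall n : nat, 7 <= n -> 2 * fq n = fq (n + 2) + fq (n - 5)) /\
  (forall n : nat, 8 <= n -> fq n + fq (n - 2) = fq (n + 1) + fq (n - 5)) /\
  (forall n : nat, 10 <= n -> fq n + fq (n - 3) = fq (n + 1) + fq (n - 8)).
Proof. have [h1 [h2 h3]] := pad_ids.
by split; [|split] => n hn; rewrite !fq_pad; [apply: h1|apply: h2|apply: h3]. Qed.
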